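(* For all $m,t\in\mathbb{N}$, $R_t(0,m) = 2^m-\lceil 2^{m-t}\rceil$.
   Context: For a $t\times n$ matrix $\mathbf{v}$ over $\mathbb{F}_2$ with rows $\overline{v}_1,\dots,\overline{v}_t$, $\mathrm{wt}^{(t)}(\mathbf{v})=\left|\bigcup_{i} \mathrm{supp}(\overline{v}_i)\right|$ and $d^{(t)}(\mathbf{u},\mathbf{v})=\mathrm{wt}^{(t)}(\mathbf{u}-\mathbf{v})$. For a linear code $C\subseteq\mathbb{F}_2^n$, $C^t$ is the set of $t\times n$ matrices all of whose rows lie in $C$, and the $t$-th generalized covering radius $R_t(C)$ is the smallest integer $\rho$ such that for every $\mathbf{v}\in\mathbb{F}_2^{t\times n}$ some $\mathbf{c}\in C^t$ has $d^{(t)}(\mathbf{v},\mathbf{c})\le\rho$. $\mathrm{RM}(0,m)=\{\overline{0},\overline{1}\}\subseteq\mathbb{F}_2^{2^m}$ is the binary repetition code of length $2^m$, and $R_t(0,m)=R_t(\mathrm{RM}(0,m))$. *)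

(* Defs.v *)
From HB Require Import structures.
From mathcomp Require Import all_boot all_order all_algebra.
Set Implicit Arguments. Unset Strict Implicit. Unset Printing Implicit Defensive.
Import GRing.Theory.
Local Open Scope ring_scope.

Definition gwt (t n : nat) (v : 'M['F_2]_(t, n)) : nat :=
  #|[set j : 'I_n | [exists i : 'I_t, v i j != 0]]|.

Definition gdist (t n : nat) (u v : 'M['F_2]_(t, n)) : nat := gwt (u - v).

Definition in_code_pow (n t : nat) (C : {set 'rV['F_2]_n}) (c : 'M['F_2]_(t, n)) : bool :=
  [forall i : 'I_t, row i c \in C].

Definition gcovers (n t : nat) (C : {set 'rV['F_2]_n}) (rho : nat) : Prop :=
  forall v : 'M['F_2]_(t, n), exists c : 'M['F_2]_(t, n),
    in_code_pow C c /\ (gdist v c <= rho)%N.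

Definition is_gen_covering_radius (n t : nat) (C : {set 'rV['F_2]_n}) (rho : nat) : Prop :=
  @gcovers n t C rho /\ forall r : nat, @gcovers n t C r -> (rho <= r)%N.

Definition RM0 (m : nat) : {set 'rV['F_2]_(2 ^ m)} :=
  [set 0; const_mx 1].

(* Main.v *)
Require Import Defs.
From mathcomp Require Import all_boot all_order all_algebra.
Import GRing.Theory.

Section Aux.
Variables (m t : nat).
Local Notation n := (2 ^ m)%N.

Definition colf (v : 'M['F_2]_(t, n)) (j : 'I_n) : {ffun 'I_t -> 'F_2} :=
  [ffun i => v i j].

Lemma gwt_split (v c : 'M['F_2]_(t, n)) (b : {ffun 'I_t -> 'F_2}) :
  (forall i j, c i j = b i) ->
  gdist v c = (n - #|[set j | colf v j == b]|)%N.
Proof.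
move=> Hc; rewrite /gdist /gwt.
have -> : [set j : 'I_n | [exists i : 'I_t, (v - c)%R i j != 0%R]]
          = ~: [set j | colf v j == b].
  apply/setP=> j; rewrite !inE -[LHS]negbK negb_exists; congr (~~ _).
  apply/forallP/eqP.
  - move=> Hall; apply/ffunP=> i; move: (Hall i).
    by rewrite negbK !mxE Hc subr_eq0 ffunE => /eqP.
  - move=> /ffunP Hf i; rewrite negbK !mxE Hc subr_eq0; move: (Hf i).
    by rewrite ffunE => ->.
by rewrite cardsCs card_ord setCK.
Qed.

Lemma sum_classes (v : 'M['F_2]_(t, n)) :
  (\sum_(b : {ffun 'I_t -> 'F_2}) #|[set j | colf v j == b]|)%N = n.
Proof.
rewrite -[RHS]card_ord -sum1_card (partition_big (colf v) predT) //=.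
apply: eq_bigr => b _; rewrite sum1_card; apply: eq_card => j; by rewrite inE.
Qed.

Lemma card_F2_ffun : #|{ffun 'I_t -> 'F_2}| = (2 ^ t)%N.
Proof. by rewrite card_ffun !card_ord. Qed.

Lemma pow_bound : (2 ^ t * (2 ^ (m - t) - 1) < 2 ^ m)%N.
Proof.
case: (leqP t m) => Htm.
  rewrite mulnBr muln1 -expnD subnKC //.
  rewrite ltn_subrL !expn_gt0.
  done.
have -> : (m - t = 0)%N by apply/eqP; rewrite subn_eq0 ltnW.
by rewrite expn0 subnn muln0 expn_gt0.
Qed.

Lemma F2_cases (x : 'F_2) : x = 0%R \/ x = 1%R.
Proof.
case: x => [[|[|k]] Hk]; [left | right | by []]; exact: val_inj.
Qed.

Lemma upper (v : 'M['F_2]_(t, n)) : exists c : 'M['F_2]_(t, n),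
    in_code_pow (RM0 m) c /\ (gdist v c <= 2 ^ m - 2 ^ (m - t))%N.
Proof.
have [b Hb] : exists b, (2 ^ (m - t) <= #|[set j | colf v j == b]|)%N.
  case: (boolP [exists b, (2 ^ (m - t) <= #|[set j | colf v j == b]|)%N])
    => [/existsP // | /existsPn Hall]; exfalso.
  have : (n <= 2 ^ t * (2 ^ (m - t) - 1))%N.
    rewrite -{1}(sum_classes v) -card_F2_ffun -sum_nat_const.
    apply: leq_sum => b _; move: (Hall b); rewrite -ltnNge => H.
    by rewrite -ltnS subn1 prednK ?expn_gt0.
  by rewrite leqNgt pow_bound.
exists (\matrix_(i, j) b i)%R; split.
  apply/forallP => i; rewrite /RM0 !inE.
  case: (F2_cases (b i)) => Hbi.
    apply/orP; left; apply/eqP/matrixP => x y; by rewrite !mxE Hbi.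
  apply/orP; right; apply/eqP/matrixP => x y; by rewrite !mxE Hbi.
rewrite (@gwt_split _ _ b); last by move=> i j; rewrite mxE.
by apply: leq_sub2l.
Qed.

Definition vbad : 'M['F_2]_(t, n) := (\matrix_(i, j) (odd (j %/ 2 ^ i))%:R)%R.

Lemma bits_inj : forall k j1 j2,
  (forall i, (i < k)%N -> odd (j1 %/ 2 ^ i) = odd (j2 %/ 2 ^ i)) ->
  j1 %/ 2 ^ k = j2 %/ 2 ^ k -> j1 = j2.
Proof.
elim=> [|k IH] j1 j2 Hb Hd.
  by move: Hd; rewrite expn0 !divn1.
have H0 : odd j1 = odd j2 by move: (Hb 0%N isT); rewrite expn0 !divn1.
have Hh : j1./2 = j2./2.
  apply: IH.
    move=> i Hi; rewrite -!divn2 -!divnMA -expnS; exact: Hb.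
  by rewrite -!divn2 -!divnMA -expnS.
by rewrite -(odd_double_half j1) -(odd_double_half j2) H0 Hh.
Qed.

Lemma div_lt (j : 'I_n) : (j %/ 2 ^ t < 2 ^ (m - t))%N.
Proof.
rewrite ltn_divLR ?expn_gt0 // -expnD.
apply: (leq_trans (ltn_ord j)); apply: leq_pexp2l => //.
by rewrite addnC -leq_subLR.
Qed.

Lemma F2_nat_inj (a b : bool) : (a%:R : 'F_2)%R = (b%:R : 'F_2)%R -> a = b.
Proof. by case: a; case: b. Qed.

Lemma lower (c : 'M['F_2]_(t, n)) : in_code_pow (RM0 m) c ->
  (2 ^ m - 2 ^ (m - t) <= gdist vbad c)%N.
Proof.
move=> /forallP Hc.
pose b : {ffun 'I_t -> 'F_2} := [ffun i => if row i c == 0%R then 0%R else 1%R].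
have Hcb : forall i j, c i j = b i.
  move=> i j; have Ecij : c i j = row i c ord0 j by rewrite mxE.
  rewrite ffunE; move: (Hc i); rewrite /RM0 !inE => /orP [] /eqP Hr.
    by rewrite Hr eqxx Ecij Hr mxE.
  have Hr0 : row i c != 0%R.
    apply/eqP => H0; have := congr1 (fun M : 'M['F_2]_(1, n) => M ord0 j) (etrans (esym Hr) H0).
    by rewrite !mxE => /eqP; rewrite oner_eq0.
  by rewrite (negbTE Hr0) Ecij Hr mxE.
rewrite (@gwt_split _ _ b Hcb); apply: leq_sub2l.
pose f (j : 'I_n) : 'I_(2 ^ (m - t)) := Ordinal (div_lt j).
rewrite -(@card_in_imset _ _ f); first by apply: leq_trans (max_card _) _; rewrite card_ord.
move=> j1 j2; rewrite !inE => /eqP H1 /eqP H2 [] Hf; apply: val_inj => /=.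
apply: (@bits_inj t) => // i Hi.
apply: F2_nat_inj.
have := congr1 (fun f : {ffun 'I_t -> 'F_2} => f (Ordinal Hi)) (etrans H1 (esym H2)).
by rewrite !ffunE !mxE.
Qed.
End Aux.

(* ceil(2^(m-t)) = 2^(m - t) with truncated nat subtraction (equals 1 when t > m) *)
Theorem proposition9 (m t : nat) :
  @is_gen_covering_radius (2 ^ m) t (RM0 m) (2 ^ m - 2 ^ (m - t))%N.
Proof.
split; first exact: upper.
move=> r Hr; have [c [Hc Hd]] := Hr (vbad m t).
exact: leq_trans (@lower m t c Hc) Hd.
Qed.
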